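(* Let $X$ and $Y$ be any words. Then $X\sim Y$ if and only if there is a sequence of swaps between $X$ and $Y$ in which every swap is of type $(U,D)$ for some upper prime $U$ and some lower prime $D$.
   Context: $\mathcal{A}$ is the free associative $\mathbb{C}$-algebra on noncommuting generators $L,R$; words are finite products of these letters. A word is balanced if it contains equally many $L$'s and $R$'s. $\mathcal{J}$ is the two-sided ideal generated by $\{FG-GF : F,G \text{ nonempty balanced words}\}$, and $X\sim Y$ means $X-Y\in\mathcal{J}$. For nonempty balanced $F,G$ and words $W_1,W_2$, the words $W_1FGW_2$ and $W_1GFW_2$ are related by a swap of type $(F,G)$ (same as type $(G,F)$); a sequence of swaps between $X$ and $Y$ is a sequence $Z_1=X,\dots,Z_k=Y$ with consecutive words related by a swap. A word is prime if it is nonempty, balanced, and not a product of two nonempty balanced words. For balanced $W=a_1\cdots a_n$, $e_k(W)=\sum_{i=1}^k\overline{a_i}$ with $\overline{R}=1$, $\overline{L}=-1$. A prime $P$ of length $n$ is an upper prime if $e_k(P)>0$ for $1\le k\le n-1$, and a lower prime if $e_k(P)<0$ for $1\le k\le n-1$. *)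

(* Defs.v *)
From HB Require Import structures.
From mathcomp Require Import all_boot all_order all_algebra.
From mathcomp Require Import complex.
From mathcomp Require Import Rstruct.
Set Implicit Arguments. Unset Strict Implicit. Unset Printing Implicit Defensive.
Import Order.TTheory GRing.Theory Num.Theory.

Definition C : fieldType := (Rdefinitions.R)[i].

Inductive letter := L | R.

Definition letter_eqb (a b : letter) : bool :=
  match a, b with L, L | R, R => true | _, _ => false end.
Lemma letter_eqP : Equality.axiom letter_eqb.
Proof. by case; case; constructor. Qed.
HB.instance Definition _ := hasDecEq.Build letter letter_eqP.

Definition word := seq letter.

Definition balanced (W : word) : bool := count_mem L W == count_mem R W.

Definition bar (a : letter) : int := if a is R then 1%:Z else (-1)%R.
Definition e (k : nat) (W : word) : int := (\sum_(a <- take k W) bar a)%R.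

Definition prime_word (P : word) : Prop :=
  [/\ P != [::], balanced P &
      ~ (exists A B : word, [/\ A != [::], B != [::], balanced A, balanced B
                              & P = A ++ B])].

Definition upper_prime (P : word) : Prop :=
  prime_word P /\ (forall k, 1 <= k <= (size P).-1 -> (0 < e k P)%R).

Definition lower_prime (P : word) : Prop :=
  prime_word P /\ (forall k, 1 <= k <= (size P).-1 -> (e k P < 0)%R).

(* The free associative C-algebra A on L, R: an element is identified with
   its coefficient function on the basis of words (all elements built below
   have finite support). *)
Definition elt := word -> C.

Definition delta (W : word) : elt := fun V => if V == W then 1%R else 0%R.

Definition lmulw (W : word) (f : elt) : elt :=
  fun V => if take (size W) V == W then f (drop (size W) V) else 0%R.
Definition rmulw (f : elt) (W : word) : elt :=
  fun V => if drop (size V - size W) V == W then f (take (size V - size W) V)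
           else 0%R.

(* The two-sided ideal J generated by { FG - GF : F, G nonempty balanced }.
   Since the words span A and multiplication is bilinear, this is the
   smallest subspace containing the generators and closed under left and
   right multiplication by words. *)
Inductive inJ : elt -> Prop :=
| inJ_zero : inJ (fun _ => 0%R)
| inJ_gen (F G : word) : F != [::] -> G != [::] -> balanced F -> balanced G ->
    inJ (fun V => delta (F ++ G) V - delta (G ++ F) V)%R
| inJ_add (f g : elt) : inJ f -> inJ g -> inJ (fun V => f V + g V)%R
| inJ_scale (c : C) (f : elt) : inJ f -> inJ (fun V => c * f V)%R
| inJ_lmul (W : word) (f : elt) : inJ f -> inJ (lmulw W f)
| inJ_rmul (W : word) (f : elt) : inJ f -> inJ (rmulw f W).

Definition equivJ (X Y : word) : Prop := inJ (fun V => delta X V - delta Y V)%R.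

Definition swap_of_type (F G : word) (Z Z' : word) : Prop :=
  exists W1 W2 : word,
    (Z = W1 ++ F ++ G ++ W2 /\ Z' = W1 ++ G ++ F ++ W2) \/
    (Z = W1 ++ G ++ F ++ W2 /\ Z' = W1 ++ F ++ G ++ W2).

Definition UD_swap (Z Z' : word) : Prop :=
  exists U D : word, [/\ upper_prime U, lower_prime D & swap_of_type U D Z Z'].

Fixpoint chain (rel : word -> word -> Prop) (Z : word) (s : seq word) : Prop :=
  if s is Z' :: s' then rel Z Z' /\ chain rel Z' s' else True.

Definition UD_swap_sequence (X Y : word) : Prop :=
  exists s : seq word, chain UD_swap X s /\ last X s = Y.

(* Main.v *)
Require Import Defs.
From mathcomp Require Import all_boot all_order all_algebra zify ring.
From Stdlib Require Import FunctionalExtensionality ClassicalEpsilon.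
Set Implicit Arguments. Unset Strict Implicit. Unset Printing Implicit Defensive.
Import Order.TTheory GRing.Theory Num.Theory.

Local Open Scope ring_scope.

Definition h (W : word) : int := \sum_(a <- W) bar a.

Lemma h_nil : h [::] = 0. Proof. by rewrite /h big_nil. Qed.
Lemma h_cons a W : h (a :: W) = bar a + h W. Proof. by rewrite /h big_cons. Qed.
Lemma h_cat A B : h (A ++ B) = h A + h B. Proof. by rewrite /h big_cat. Qed.
Lemma eE k W : e k W = h (take k W). Proof. by []. Qed.

Lemma hE W : h W = (count_mem R W)%:Z - (count_mem L W)%:Z.
Proof.
elim: W => [|a W IH]; first by rewrite h_nil.
rewrite h_cons IH /=; case: a => /=; lia.
Qed.

Lemma balE W : balanced W = (h W == 0).
Proof. rewrite /balanced hE; apply/idP/idP => /eqP H; apply/eqP; lia. Qed.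

Lemma bar_pm a : bar a = 1 \/ bar a = -1.
Proof. by case: a; [right|left]. Qed.

Lemma h_step W j : h (take j W) - 1 <= h (take j.+1 W) <= h (take j W) + 1.
Proof.
elim: W j => [|a W IH] j; first by rewrite /= h_nil; lia.
case: j => [|j].
  rewrite take0 /= take0 h_cons !h_nil; case: (bar_pm a) => ->; lia.
rewrite [take j.+2 _]/= [take j.+1 (a :: W)]/= !h_cons.
have := IH j; lia.
Qed.
Lemma step_pos (a b : int) : a <> 0 -> b - 1 <= a <= b + 1 -> 0 < b -> 0 < a.
Proof. move=> H1 /andP[H2 H3] H4; lia. Qed.
Lemma step_neg (a b : int) : a <> 0 -> b - 1 <= a <= b + 1 -> b < 0 -> a < 0.
Proof. move=> H1 /andP[H2 H3] H4; lia. Qed.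

Lemma prime_of P : upper_prime P \/ lower_prime P -> prime_word P.
Proof. by case=> -[]. Qed.

Lemma split_prime W : W != [::] -> balanced W ->
  exists P W' : word, [/\ W = P ++ W', P != [::], balanced W' & upper_prime P \/ lower_prime P].
Proof.
move=> nW bW.
have ex : exists k, (0 < k)%N && (h (take k W) == 0).
  exists (size W); rewrite take_size -balE bW andbT lt0n size_eq0 //.
case: (ex_minnP ex) => m /andP[m0 /eqP hm] minm.
have mW : (m <= size W)%N.
  by apply: minm; rewrite take_size -balE bW andbT lt0n size_eq0.
have key : forall j, (0 < j)%N -> (j < m)%N -> h (take j W) <> 0.
  move=> j j0 jm hj; have := minm j; rewrite j0 hj eqxx => /(_ isT); lia.
have sP : size (take m W) = m by rewrite size_takel.
have tP : forall j, (j <= m)%N -> take j (take m W) = take j W.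
  by move=> j jm; rewrite take_takel.
exists (take m W), (drop m W); split.
- by rewrite cat_take_drop.
- by rewrite -size_eq0 sP -lt0n.
- rewrite balE; move: bW; rewrite balE -{1}(cat_take_drop m W) h_cat hm add0r.
  by [].
have pw : prime_word (take m W).
  split.
  - by rewrite -size_eq0 sP -lt0n.
  - by rewrite balE hm.
  move=> [A [B [nA nB bA bB EAB]]].
  have sA : (0 < size A)%N by rewrite lt0n size_eq0.
  have sB : (0 < size B)%N by rewrite lt0n size_eq0.
  have sAB : (size A + size B)%N = m by rewrite -size_cat -EAB.
  apply: (key (size A)) => //; first by lia.
  rewrite -tP; last by lia.
  by rewrite EAB take_size_cat //; apply/eqP; rewrite -balE.
have Wn : W = head L W :: behead W by destruct W.
have h1 : h (take 1 W) = bar (head L W).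
  by rewrite Wn /= take0 h_cons h_nil addr0.
case: (bar_pm (head L W)) => hb; [left|right]; split => // k /andP[k1 km];
  rewrite sP in km; have km' : (k < m)%N by lia.
all: rewrite eE tP; last by lia.
- have : forall j, (0 < j)%N -> (j < m)%N -> 0 < h (take j W).
    elim=> [//|j IH] _ jm.
    case: j IH jm => [|j] IH jm; first by rewrite h1 hb.
    exact: (step_pos (key j.+2 isT jm) (h_step W j.+1) (IH isT (ltnW jm))).
  by apply.
- have : forall j, (0 < j)%N -> (j < m)%N -> h (take j W) < 0.
    elim=> [//|j IH] _ jm.
    case: j IH jm => [|j] IH jm; first by rewrite h1 hb.
    exact: (step_neg (key j.+2 isT jm) (h_step W j.+1) (IH isT (ltnW jm))).
  by apply.
Qed.

Definition nonneg W := forall k, 0 <= h (take k W).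
Definition nonpos W := forall k, h (take k W) <= 0.

Lemma prime_size2 P : prime_word P -> (2 <= size P)%N.
Proof.
case=> nP bP _; case: P nP bP => [|a [|b P]] //.
by case: a.
Qed.

Lemma nonneg_lower P W' : nonneg (P ++ W') -> lower_prime P -> False.
Proof.
move=> nn [pP HP].
have s2 := prime_size2 pP.
have := HP 1%N; rewrite eE; have := nn 1%N; rewrite takel_cat; last by lia.
move=> H1 H2; have := H2 (ltac:(apply/andP; split; lia)).
by rewrite ltNge H1.
Qed.

Lemma nonpos_upper P W' : nonpos (P ++ W') -> upper_prime P -> False.
Proof.
move=> nn [pP HP].
have s2 := prime_size2 pP.
have := HP 1%N; rewrite eE; have := nn 1%N; rewrite takel_cat; last by lia.
move=> H1 H2; have := H2 (ltac:(apply/andP; split; lia)).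
by rewrite ltNge H1.
Qed.

Lemma take_catr (P W' : word) k : take (size P + k) (P ++ W') = P ++ take k W'.
Proof. by rewrite take_cat ltnNge leq_addr /= addKn. Qed.

Lemma nonneg_drop P W' : balanced P -> nonneg (P ++ W') -> nonneg W'.
Proof.
rewrite balE => /eqP bP nn k; have := nn (size P + k)%N.
by rewrite take_catr h_cat bP add0r.
Qed.

Lemma nonpos_drop P W' : balanced P -> nonpos (P ++ W') -> nonpos W'.
Proof.
rewrite balE => /eqP bP nn k; have := nn (size P + k)%N.
by rewrite take_catr h_cat bP add0r.
Qed.

Lemma upper_shape P : upper_prime P ->
  exists A, [/\ P = R :: A ++ [:: L], balanced A & nonneg A].
Proof.
move=> [pP HP]; have s2 := prime_size2 pP.
have bP : h P = 0 by case: pP => _; rewrite balE => /eqP.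
case: P s2 HP bP {pP} => [|a B] // s2 HP bP.
case/lastP: B s2 HP bP => [|A b] // s2 HP bP.
rewrite /= size_rcons /= in s2 HP.
have Ha : 0 < bar a.
  have := HP 1%N; rewrite eE /= take0 h_cons h_nil addr0; apply.
  by [].
have Ea : a = R by move: Ha; clear; case: a.
have hA : 0 < bar a + h A.
  have := HP (size A).+1; rewrite eE [take _ _]/= -cats1 take_size_cat // h_cons.
  apply; apply/andP; split => //.
move: bP; rewrite -cats1 -cat_cons h_cat h_cons h_cons h_nil addr0 => bP.
have Eb : b = L by move: bP hA; rewrite Ea; move: (h A) => x; clear; case: b => //=; lia.
have hA0 : h A = 0 by move: bP hA; rewrite Ea Eb /=; move: (h A) => x; lia.
exists A; split.
- by rewrite Ea Eb.
- by rewrite balE hA0.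
move=> k; case: (leqP k (size A)) => kA.
  have := HP k.+1; rewrite eE [take _ _]/= -cats1 takel_cat // h_cons Ea /=.
  have : (1 <= k.+1 <= (size A).+1)%N by apply/andP; split.
  move=> H1 /(_ H1); lia.
by rewrite take_oversize ?hA0 // ltnW.
Qed.

Lemma lower_shape P : lower_prime P ->
  exists A, [/\ P = L :: A ++ [:: R], balanced A & nonpos A].
Proof.
move=> [pP HP]; have s2 := prime_size2 pP.
have bP : h P = 0 by case: pP => _; rewrite balE => /eqP.
case: P s2 HP bP {pP} => [|a B] // s2 HP bP.
case/lastP: B s2 HP bP => [|A b] // s2 HP bP.
rewrite /= size_rcons /= in s2 HP.
have Ha : bar a < 0.
  have := HP 1%N; rewrite eE /= take0 h_cons h_nil addr0; apply.
  by [].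
have Ea : a = L by move: Ha; clear; case: a.
have hA : bar a + h A < 0.
  have := HP (size A).+1; rewrite eE [take _ _]/= -cats1 take_size_cat // h_cons.
  apply; apply/andP; split => //.
move: bP; rewrite -cats1 -cat_cons h_cat h_cons h_cons h_nil addr0 => bP.
have Eb : b = R by move: bP hA; rewrite Ea; move: (h A) => x; clear; case: b => //=; lia.
have hA0 : h A = 0 by move: bP hA; rewrite Ea Eb /=; move: (h A) => x; lia.
exists A; split.
- by rewrite Ea Eb.
- by rewrite balE hA0.
move=> k; case: (leqP k (size A)) => kA.
  have := HP k.+1; rewrite eE [take _ _]/= -cats1 takel_cat // h_cons Ea /=.
  have : (1 <= k.+1 <= (size A).+1)%N by apply/andP; split.
  move=> H1 /(_ H1); lia.
by rewrite take_oversize ?hA0 // ltnW.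
Qed.

Lemma prime2 a b : a != b -> prime_word [:: a; b].
Proof.
move=> ab; split => //; first by case: a b ab => -[].
move=> [A [B [nA nB bA bB E]]].
case: A nA bA E => [|x [|y A]] // _ bA.
  by case: x bA.
move=> E; have := congr1 size E; rewrite /= size_cat; case: B nB {bB E} => [|z B] //= _; lia.
Qed.

Lemma upper_RL : upper_prime [:: R; L].
Proof.
split; first exact: prime2.
move=> k /andP[k1 k2]; have -> : k = 1%N by apply/eqP; rewrite eqn_leq k1 k2.
by rewrite eE /= !h_cons h_nil.
Qed.

Lemma lower_LR : lower_prime [:: L; R].
Proof.
split; first exact: prime2.
move=> k /andP[k1 k2]; have -> : k = 1%N by apply/eqP; rewrite eqn_leq k1 k2.
by rewrite eE /= !h_cons h_nil.
Qed.

Inductive eqv : word -> word -> Prop :=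
| eqv_refl X : eqv X X
| eqv_swap U D W1 W2 : upper_prime U -> lower_prime D ->
    eqv (W1 ++ U ++ D ++ W2) (W1 ++ D ++ U ++ W2)
| eqv_sym X Y : eqv X Y -> eqv Y X
| eqv_trans X Y Z : eqv X Y -> eqv Y Z -> eqv X Z.

Lemma eqv_eq X Y X' Y' : X = X' -> Y = Y' -> eqv X Y -> eqv X' Y'.
Proof. by move=> -> ->. Qed.

Lemma eqv_cong A B X Y : eqv X Y -> eqv (A ++ X ++ B) (A ++ Y ++ B).
Proof.
elim=> {X Y}.
- move=> X; exact: eqv_refl.
- move=> U D W1 W2 HU HD.
  apply: eqv_eq (eqv_swap (A ++ W1) (W2 ++ B) HU HD); by rewrite -!catA.
- move=> X Y _ H; exact: eqv_sym.
- move=> X Y Z _ H1 _ H2; exact: eqv_trans H1 H2.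
Qed.

Lemma move_LR n A : (size A < n)%N -> balanced A -> nonneg A ->
  eqv (A ++ [:: L; R]) ([:: L; R] ++ A).
Proof.
elim: n A => [//|n IH] A sA bA nA.
have [->|nA0] := eqVneq A [::]; first exact: eqv_refl.
have [P [A' [EA nP bA' HP]]] := split_prime nA0 bA.
have HU : upper_prime P.
  case: HP => // HD; exfalso; apply: (nonneg_lower (W' := A')) HD; by rewrite -EA.
have sP : (0 < size P)%N by rewrite lt0n size_eq0.
have sA' : (size A' < n)%N.
  move: sA; rewrite EA size_cat. lia.
have nA' : nonneg A'.
  apply: (nonneg_drop (P := P)); first by case: (prime_of (or_introl HU)).
  by rewrite -EA.
have H1 := eqv_cong P [::] (IH A' sA' bA' nA').
have H2 := eqv_swap [::] A' HU lower_LR.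
rewrite EA; apply: (@eqv_trans _ (P ++ [:: L; R] ++ A')).
  by apply: eqv_eq H1; rewrite ?cats0 // -catA.
by apply: eqv_eq H2; rewrite /= -?catA.
Qed.

Lemma move_RL n A : (size A < n)%N -> balanced A -> nonpos A ->
  eqv (A ++ [:: R; L]) ([:: R; L] ++ A).
Proof.
elim: n A => [//|n IH] A sA bA nA.
have [->|nA0] := eqVneq A [::]; first exact: eqv_refl.
have [P [A' [EA nP bA' HP]]] := split_prime nA0 bA.
have HD : lower_prime P.
  case: HP => // HU; exfalso; apply: (nonpos_upper (W' := A')) HU; by rewrite -EA.
have sP : (0 < size P)%N by rewrite lt0n size_eq0.
have sA' : (size A' < n)%N.
  move: sA; rewrite EA size_cat. lia.
have nA' : nonpos A'.
  apply: (nonpos_drop (P := P)); first by case: (prime_of (or_intror HD)).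
  by rewrite -EA.
have H1 := eqv_cong P [::] (IH A' sA' bA' nA').
have H2 := eqv_sym (eqv_swap [::] A' upper_RL HD).
rewrite EA; apply: (@eqv_trans _ (P ++ [:: R; L] ++ A')).
  by apply: eqv_eq H1; rewrite ?cats0 // -catA.
by apply: eqv_eq H2; rewrite /= -?catA.
Qed.

Definition comm_hyp n := forall F G : word, (size F + size G < n)%N ->
  balanced F -> balanced G -> eqv (F ++ G) (G ++ F).

Lemma upper_case n P Q : comm_hyp n -> (size P + size Q < n.+1)%N ->
  upper_prime P -> upper_prime Q -> eqv (P ++ Q) (Q ++ P).
Proof.
move=> IH sPQ /upper_shape [A [EP bA nA]] /upper_shape [B [EQ bB nB]].
have sAB : (size A + size B < n)%N by move: sPQ; rewrite EP EQ /= !size_cat /=; lia.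
have H1 := eqv_cong [:: R] (B ++ [:: L]) (move_LR (ltnSn (size A)) bA nA).
have H2 := eqv_cong [:: R; L; R] [:: L] (IH A B sAB bA bB).
have H3 := eqv_cong [:: R] (A ++ [:: L]) (eqv_sym (move_LR (ltnSn (size B)) bB nB)).
apply: (eqv_trans (eqv_eq _ _ H1)); first by rewrite EP EQ /= -!catA.
  by [].
apply: (eqv_trans (eqv_eq _ _ H2)); first by rewrite /= -!catA.
  by [].
apply: (eqv_eq _ _ H3); first by rewrite /= -!catA.
by rewrite EP EQ /= -!catA.
Qed.

Lemma lower_case n P Q : comm_hyp n -> (size P + size Q < n.+1)%N ->
  lower_prime P -> lower_prime Q -> eqv (P ++ Q) (Q ++ P).
Proof.
move=> IH sPQ /lower_shape [A [EP bA nA]] /lower_shape [B [EQ bB nB]].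
have sAB : (size A + size B < n)%N by move: sPQ; rewrite EP EQ /= !size_cat /=; lia.
have H1 := eqv_cong [:: L] (B ++ [:: R]) (move_RL (ltnSn (size A)) bA nA).
have H2 := eqv_cong [:: L; R; L] [:: R] (IH A B sAB bA bB).
have H3 := eqv_cong [:: L] (A ++ [:: R]) (eqv_sym (move_RL (ltnSn (size B)) bB nB)).
apply: (eqv_trans (eqv_eq _ _ H1)); first by rewrite EP EQ /= -!catA.
  by [].
apply: (eqv_trans (eqv_eq _ _ H2)); first by rewrite /= -!catA.
  by [].
apply: (eqv_eq _ _ H3); first by rewrite /= -!catA.
by rewrite EP EQ /= -!catA.
Qed.

Lemma bal_prime P : upper_prime P \/ lower_prime P -> balanced P.
Proof. by move/prime_of => -[]. Qed.

Lemma comm n : comm_hyp n.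
Proof.
elim: n => [//|n IH] F G sFG bF bG.
have [->|nF] := eqVneq F [::]; first by rewrite cats0; exact: eqv_refl.
have [->|nG] := eqVneq G [::]; first by rewrite cats0; exact: eqv_refl.
have [P [F' [EF nP bF' HP]]] := split_prime nF bF.
have [Q [G' [EG nQ bG' HQ]]] := split_prime nG bG.
have sP : (0 < size P)%N by rewrite lt0n size_eq0.
have sQ : (0 < size Q)%N by rewrite lt0n size_eq0.
have bP := bal_prime HP. have bQ := bal_prime HQ.
have [EF'|nF'] := eqVneq F' [::]; last first.
  have sF' : (0 < size F')%N by rewrite lt0n size_eq0.
  have H1 := eqv_cong P [::] (IH F' G ltac:(move: sFG; rewrite EF size_cat; lia) bF' bG).
  have H2 := eqv_cong [::] F' (IH P G ltac:(move: sFG; rewrite EF size_cat; lia) bP bG).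
  rewrite EF; apply: (eqv_trans (eqv_eq _ _ H1)); first by rewrite cats0 catA.
    by [].
  by apply: eqv_eq H2; rewrite /= ?cats0 -?catA.
rewrite EF' cats0 in EF; subst F.
have [EG'|nG'] := eqVneq G' [::]; last first.
  have sG' : (0 < size G')%N by rewrite lt0n size_eq0.
  have H1 := eqv_cong [::] G' (IH P Q ltac:(move: sFG; rewrite EG size_cat; lia) bP bQ).
  have H2 := eqv_cong Q [::] (IH P G' ltac:(move: sFG; rewrite EG size_cat; lia) bP bG').
  rewrite EG; apply: (eqv_trans (eqv_eq _ _ H1)); first by rewrite /= catA.
    by [].
  by apply: eqv_eq H2; rewrite /= ?cats0 -?catA.
rewrite EG' cats0 in EG; subst G.
case: HP => HP; case: HQ => HQ.
- exact: upper_case IH sFG HP HQ.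
- by apply: eqv_eq (eqv_swap [::] [::] HP HQ); rewrite /= cats0.
- by apply: eqv_eq (eqv_sym (eqv_swap [::] [::] HQ HP)); rewrite /= cats0.
- exact: lower_case IH sFG HP HQ.
Qed.

Lemma commFG F G : balanced F -> balanced G -> eqv (F ++ G) (G ++ F).
Proof. exact: (@comm (size F + size G).+1). Qed.

Lemma chain_cat (rel : word -> word -> Prop) X s1 s2 :
  chain rel X (s1 ++ s2) <-> chain rel X s1 /\ chain rel (last X s1) s2.
Proof.
elim: s1 X => [|Z s IH] X /=; first by split=> // -[].
rewrite IH; split; [by case=> ? [] | by case=> -[]].
Qed.

Lemma seq_trans X Y Z : UD_swap_sequence X Y -> UD_swap_sequence Y Z ->
  UD_swap_sequence X Z.
Proof.
move=> [s1 [c1 l1]] [s2 [c2 l2]]; exists (s1 ++ s2); split.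
  by apply/chain_cat; rewrite l1.
by rewrite last_cat l1.
Qed.

Lemma seq_step X Y : UD_swap X Y -> UD_swap_sequence X Y.
Proof. by move=> H; exists [:: Y]. Qed.

Lemma UD_swap_sym X Y : UD_swap X Y -> UD_swap Y X.
Proof.
move=> [U [D [HU HD [W1 [W2 [[-> ->]|[-> ->]]]]]]]; exists U, D; split => //;
  exists W1, W2; [right|left]; done.
Qed.

Lemma UD_swap_eqv X Y : UD_swap X Y -> eqv X Y.
Proof.
move=> [U [D [HU HD [W1 [W2 [[-> ->]|[-> ->]]]]]]].
  exact: eqv_swap.
exact: eqv_sym (eqv_swap _ _ HU HD).
Qed.

Lemma eqv_seq X Y : eqv X Y -> UD_swap_sequence X Y /\ UD_swap_sequence Y X.
Proof.
elim=> {X Y}.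
- by move=> X; split; exists [::].
- move=> U D W1 W2 HU HD.
  have H : UD_swap (W1 ++ U ++ D ++ W2) (W1 ++ D ++ U ++ W2).
    by exists U, D; split => //; exists W1, W2; left.
  split; apply: seq_step => //; exact: UD_swap_sym.
- by move=> X Y _ [].
- move=> X Y Z _ [H1 H2] _ [H3 H4]; split; [exact: seq_trans H1 H3 | exact: seq_trans H4 H2].
Qed.

Lemma seq_eqv X Y : UD_swap_sequence X Y -> eqv X Y.
Proof.
move=> [s [Hc Hl]]; elim: s X Hc Hl => [|Z s IH] X /=.
  by move=> _ ->; exact: eqv_refl.
move=> [H1 H2] Hl; apply: eqv_trans (UD_swap_eqv H1) (IH Z H2 Hl).
Qed.

Lemma delta_lmul W A V : delta (W ++ A) V =
  if take (size W) V == W then delta A (drop (size W) V) else 0.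
Proof.
rewrite /delta; have [EV|nEV] := eqVneq V (W ++ A).
  by rewrite EV take_size_cat // drop_size_cat // !eqxx.
case: eqP => // Ht; case: eqP => // Hd; exfalso; move/eqP: nEV; apply.
by rewrite -(cat_take_drop (size W) V) Ht Hd.
Qed.

Lemma delta_rmul W A V : delta (A ++ W) V =
  if drop (size V - size W) V == W then delta A (take (size V - size W) V) else 0.
Proof.
rewrite /delta; have [EV|nEV] := eqVneq V (A ++ W).
  have E : (size V - size W)%N = size A by rewrite EV size_cat addnK.
  by rewrite E EV take_size_cat // drop_size_cat // !eqxx.
case: eqP => // Ht; case: eqP => // Hd; exfalso; move/eqP: nEV; apply.
by rewrite -(cat_take_drop (size V - size W) V) Ht Hd.
Qed.

Lemma inJ_ext f g : inJ f -> (forall V, f V = g V) -> inJ g.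
Proof. by move=> H E; have <- : f = g by apply: functional_extensionality. Qed.

Lemma inJ_lmul_delta W A B : inJ (fun V => delta A V - delta B V) ->
  inJ (fun V => delta (W ++ A) V - delta (W ++ B) V).
Proof.
move/(inJ_lmul W)/inJ_ext; apply=> V; rewrite /lmulw !delta_lmul.
by case: ifP; rewrite ?subr0.
Qed.

Lemma inJ_rmul_delta W A B : inJ (fun V => delta A V - delta B V) ->
  inJ (fun V => delta (A ++ W) V - delta (B ++ W) V).
Proof.
move/(inJ_rmul W)/inJ_ext; apply=> V; rewrite /rmulw !delta_rmul.
by case: ifP; rewrite ?subr0.
Qed.

Lemma eqv_equivJ X Y : eqv X Y -> equivJ X Y.
Proof.
rewrite /equivJ; elim=> {X Y}.
- by move=> X; apply: inJ_ext inJ_zero _ => V; rewrite subrr.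
- move=> U D W1 W2 [[nU bU _] _] [[nD bD _] _].
  have := inJ_lmul_delta W1 (inJ_rmul_delta W2 (inJ_gen nU nD bU bD)).
  by rewrite -!catA.
- move=> X Y _ H; apply: inJ_ext (inJ_scale (-1) H) _ => V.
  by rewrite mulN1r opprB.
- move=> X Y Z _ H1 _ H2; apply: inJ_ext (inJ_add H1 H2) _ => V.
  by rewrite addrA subrK.
Qed.

Definition comb (l : seq (C * word * word)) : elt :=
  fun V => \sum_(t <- l) t.1.1 * (delta t.1.2 V - delta t.2 V).

Lemma rep f : inJ f -> exists l : seq (C * word * word),
  (forall t, t \in l -> eqv t.1.2 t.2) /\ (forall V, f V = comb l V).
Proof.
elim=> {f}.
- exists [::]; split => // V; by rewrite /comb big_nil.
- move=> F G nF nG bF bG; exists [:: (1, F ++ G, G ++ F)]; split.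
    by move=> t; rewrite mem_seq1 => /eqP -> /=; exact: commFG.
  by move=> V; rewrite /comb big_seq1 /= mul1r.
- move=> f g _ [l1 [H1 E1]] _ [l2 [H2 E2]]; exists (l1 ++ l2); split.
    by move=> t; rewrite mem_cat => /orP[/H1|/H2].
  by move=> V; rewrite /comb big_cat /= E1 E2.
- move=> c f _ [l [H E]]; exists [seq (c * t.1.1, t.1.2, t.2) | t <- l]; split.
    by move=> t /mapP [t' /H Ht' ->].
  move=> V; rewrite /comb big_map E /comb mulr_sumr; apply: eq_bigr => t _.
  by rewrite mulrA.
- move=> W f _ [l [H E]]; exists [seq (t.1.1, W ++ t.1.2, W ++ t.2) | t <- l]; split.
    by move=> t /mapP [t' /H Ht' ->] /=; have := eqv_cong W [::] Ht'; rewrite !cats0.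
  move=> V; rewrite /lmulw /comb big_map; case: ifP => HV.
    rewrite E /comb; apply: eq_bigr => t _ /=; by rewrite !delta_lmul HV.
  by rewrite big1 // => t _ /=; rewrite !delta_lmul HV subrr mulr0.
- move=> W f _ [l [H E]]; exists [seq (t.1.1, t.1.2 ++ W, t.2 ++ W) | t <- l]; split.
    by move=> t /mapP [t' /H Ht' ->] /=; exact: (eqv_cong [::] W Ht').
  move=> V; rewrite /rmulw /comb big_map; case: ifP => HV.
    rewrite E /comb; apply: eq_bigr => t _ /=; by rewrite !delta_rmul HV.
  by rewrite big1 // => t _ /=; rewrite !delta_rmul HV subrr mulr0.
Qed.

Lemma sum_delta (s : seq word) (g : word -> C) A : uniq s -> A \in s ->
  \sum_(V <- s) g V * delta A V = g A.
Proof.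
move=> us As; rewrite (big_rem A) //=.
have -> : \sum_(V <- rem A s) g V * delta A V = 0.
  apply: big1_seq => V /andP[_ Vs]; rewrite /delta; case: eqP => [EV|]; last by rewrite mulr0.
  by move: Vs; rewrite EV mem_rem_uniqF.
by rewrite addr0 /delta eqxx mulr1.
Qed.

Lemma comb_zero (s : seq word) (g : word -> C) l : uniq s ->
  (forall t, t \in l -> [/\ t.1.2 \in s, t.2 \in s & g t.1.2 = g t.2]) ->
  \sum_(V <- s) g V * comb l V = 0.
Proof.
move=> us; elim: l => [|t l IH] Hl.
  by rewrite big1 // => V _; rewrite /comb big_nil mulr0.
have [H1 H2 H3] := Hl t (mem_head _ _).
rewrite /comb; under eq_bigr do rewrite big_cons mulrDr.
rewrite big_split /= IH; last by move=> t' Ht'; apply: Hl; rewrite in_cons Ht' orbT.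
rewrite addr0.
have -> : \sum_(V <- s) g V * (t.1.1 * (delta t.1.2 V - delta t.2 V)) =
   t.1.1 * (\sum_(V <- s) g V * delta t.1.2 V - \sum_(V <- s) g V * delta t.2 V).
  rewrite -sumrB mulr_sumr; apply: eq_bigr => V _; ring.
by rewrite !sum_delta // H3 subrr mulr0.
Qed.

Lemma equivJ_eqv X Y : equivJ X Y -> eqv X Y.
Proof.
move/rep => [l [Hl Hf]].
pose dec V : C := if excluded_middle_informative (eqv X V) then 1 else 0.
pose s := undup (X :: Y :: [seq t.1.2 | t <- l] ++ [seq t.2 | t <- l]).
have us : uniq s by apply: undup_uniq.
have Xs : X \in s by rewrite mem_undup mem_head.
have Ys : Y \in s by rewrite mem_undup in_cons mem_head orbT.
have H0 : \sum_(V <- s) dec V * comb l V = 0.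
  apply: comb_zero => // t Ht; split.
  - by rewrite mem_undup !in_cons mem_cat (map_f (fun t => t.1.2) Ht) ?orbT.
  - by rewrite mem_undup !in_cons mem_cat (map_f (fun t => t.2) Ht) ?orbT.
  rewrite /dec; have E := Hl t Ht.
  case: excluded_middle_informative => HA; case: excluded_middle_informative => HB //.
    by exfalso; apply: HB; exact: eqv_trans HA E.
  by exfalso; apply: HA; exact: eqv_trans HB (eqv_sym E).
have : \sum_(V <- s) dec V * (delta X V - delta Y V) = 0.
  by apply: etrans H0; apply: eq_bigr => V _; rewrite Hf.
under eq_bigr do rewrite mulrBr.
rewrite sumrB !sum_delta // /dec.
destruct (excluded_middle_informative (eqv X X)) as [XX|nXX]; last by case: nXX; exact: eqv_refl.
destruct (excluded_middle_informative (eqv X Y)) as [XY|nXY] => //.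
by rewrite subr0 => /eqP; rewrite oner_eq0.
Qed.

Theorem corollary5p4 (X Y : word) : equivJ X Y <-> UD_swap_sequence X Y.
Proof.
split.
  by move/equivJ_eqv/eqv_seq => [].
by move/seq_eqv/eqv_equivJ.
Qed.
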